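(* Let $d>1$ and let $L$ be an infinite simple modular ortholattice of height $d(L)=d$. Then $L$ has no finite test set.
   Context: A modular ortholattice (MOL) is a modular lattice with bounds $0,1$ together with an orthocomplementation $x\mapsto x'$ (an order-reversing involution with $x\wedge x'=0$, $x\vee x'=1$); its height is $d$ if maximal chains have $d+1$ elements. A subset $S\subseteq L$ is a test set for $L$ if every ortholattice identity which holds under all assignments of its variables to elements of $S$ holds in $L$. *)

(* Defs.v *)
From Stdlib Require Import List Arith.
Import ListNotations.

Record MOL := {
  car :> Type;
  meet : car -> car -> car;
  join : car -> car -> car;
  ocomp : car -> car;
  bot : car;
  top : car;
  meetC : forall x y, meet x y = meet y x;
  joinC : forall x y, join x y = join y x;
  meetA : forall x y z, meet x (meet y z) = meet (meet x y) z;
  joinA : forall x y z, join x (join y z) = join (join x y) z;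
  meetJ : forall x y, meet x (join x y) = x;
  joinM : forall x y, join x (meet x y) = x;
  bot_min : forall x, join bot x = x;
  top_max : forall x, meet top x = x;
  modular : forall x y z, meet x z = x -> join x (meet y z) = meet (join x y) z;
  ocomp_antitone : forall x y, meet x y = x -> meet (ocomp y) (ocomp x) = ocomp y;
  ocompK : forall x, ocomp (ocomp x) = x;
  meet_ocomp : forall x, meet x (ocomp x) = bot;
  join_ocomp : forall x, join x (ocomp x) = top
}.

Arguments meet {m}. Arguments join {m}. Arguments ocomp {m}.
Arguments bot {m}. Arguments top {m}.

Definition le {L : MOL} (x y : L) : Prop := meet x y = x.

Definition has_card {T : Type} (P : T -> Prop) (n : nat) : Prop :=
  exists l : list T, NoDup l /\ length l = n /\ (forall x, P x <-> In x l).

Definition is_chain {L : MOL} (C : L -> Prop) : Prop :=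
  forall x y, C x -> C y -> le x y \/ le y x.

Definition is_maximal_chain {L : MOL} (C : L -> Prop) : Prop :=
  is_chain C /\ forall D : L -> Prop, is_chain D -> (forall x, C x -> D x) ->
    forall x, D x -> C x.

Definition has_height (L : MOL) (d : nat) : Prop :=
  forall C : L -> Prop, is_maximal_chain C -> has_card C (S d).

Definition is_congruence {L : MOL} (R : L -> L -> Prop) : Prop :=
  (forall x, R x x) /\ (forall x y, R x y -> R y x) /\
  (forall x y z, R x y -> R y z -> R x z) /\
  (forall x x' y y', R x x' -> R y y' -> R (meet x y) (meet x' y')) /\
  (forall x x' y y', R x x' -> R y y' -> R (join x y) (join x' y')) /\
  (forall x x', R x x' -> R (ocomp x) (ocomp x')).

Definition simple (L : MOL) : Prop :=
  (bot : L) <> top /\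
  forall R : L -> L -> Prop, is_congruence R ->
    (forall x y, R x y -> x = y) \/ (forall x y, R x y).

Definition finite_type (T : Type) : Prop := exists l : list T, forall x, In x l.
Definition finite_set {T : Type} (S : T -> Prop) : Prop :=
  exists l : list T, forall x, S x <-> In x l.

Inductive term :=
| Var : nat -> term
| TMeet : term -> term -> term
| TJoin : term -> term -> term
| TComp : term -> term
| TBot : term
| TTop : term.

Fixpoint eval {L : MOL} (v : nat -> L) (t : term) : L :=
  match t with
  | Var n => v n
  | TMeet a b => meet (eval v a) (eval v b)
  | TJoin a b => join (eval v a) (eval v b)
  | TComp a => ocomp (eval v a)
  | TBot => bot
  | TTop => top
  end.

Definition holds_in {L : MOL} (S : L -> Prop) (s t : term) : Prop :=
  forall v : nat -> L, (forall n, S (v n)) -> eval v s = eval v t.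

Definition test_set {L : MOL} (S : L -> Prop) : Prop :=
  forall s t : term, holds_in S s t -> holds_in (fun _ : car L => True) s t.

(* Main.v *)
Require Import Defs.
From Stdlib Require Import List Arith Lia Classical ClassicalEpsilon FunctionalExtensionality PropExtensionality.
Import ListNotations.

Lemma meet_idem {L : MOL} (x : L) : meet x x = x.
Proof. rewrite <- (joinM L x x) at 2. apply meetJ. Qed.
Lemma join_idem {L : MOL} (x : L) : join x x = x.
Proof. rewrite <- (meetJ L x x) at 2. apply joinM. Qed.
Lemma le_refl {L : MOL} (x : L) : le x x.
Proof. apply meet_idem. Qed.
Lemma le_antisym {L : MOL} (x y : L) : le x y -> le y x -> x = y.
Proof. unfold le; intros H1 H2. rewrite <- H1, meetC; exact H2. Qed.
Lemma le_trans {L : MOL} (x y z : L) : le x y -> le y z -> le x z.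
Proof. unfold le; intros H1 H2. rewrite <- H1, <- meetA, H2; reflexivity. Qed.
Lemma le_join {L : MOL} (x y : L) : le x y <-> join x y = y.
Proof. unfold le; split; intro H.
- rewrite <- H, joinC, meetC. apply joinM.
- rewrite <- H. apply meetJ. Qed.
Lemma meet_lb1 {L : MOL} (x y : L) : le (meet x y) x.
Proof. unfold le. rewrite (meetC _ x y), <- meetA, meet_idem. reflexivity. Qed.
Lemma meet_lb2 {L : MOL} (x y : L) : le (meet x y) y.
Proof. unfold le. rewrite <- meetA, meet_idem. reflexivity. Qed.
Lemma meet_glb {L : MOL} (x y z : L) : le z x -> le z y -> le z (meet x y).
Proof. unfold le; intros H1 H2. rewrite meetA, H1, H2. reflexivity. Qed.
Lemma join_ub1 {L : MOL} (x y : L) : le x (join x y).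
Proof. apply meetJ. Qed.
Lemma join_ub2 {L : MOL} (x y : L) : le y (join x y).
Proof. rewrite joinC. apply meetJ. Qed.
Lemma join_lub {L : MOL} (x y z : L) : le x z -> le y z -> le (join x y) z.
Proof. rewrite !le_join; intros H1 H2. rewrite <- joinA, H2, H1. reflexivity. Qed.
Lemma le_top {L : MOL} (x : L) : le x top.
Proof. unfold le. rewrite meetC. apply top_max. Qed.
Lemma le_bot {L : MOL} (x : L) : le bot x.
Proof. apply le_join, bot_min. Qed.
Lemma join_bot {L : MOL} (x : L) : join x bot = x.
Proof. rewrite joinC; apply bot_min. Qed.
Lemma join_top {L : MOL} (x : L) : join x top = top.
Proof. apply le_join, le_top. Qed.
Lemma oc_anti {L : MOL} (x y : L) : le x y -> le (ocomp y) (ocomp x).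
Proof. apply ocomp_antitone. Qed.
Lemma demorgan {L : MOL} (x y : L) : ocomp (join x y) = meet (ocomp x) (ocomp y).
Proof. apply le_antisym.
- apply meet_glb; apply oc_anti; [apply join_ub1|apply join_ub2].
- rewrite <- (ocompK L (meet (ocomp x) (ocomp y))). apply oc_anti.
  apply join_lub; rewrite <- (ocompK L x) at 1; rewrite <- (ocompK L y) at 1; apply oc_anti;
  [apply meet_lb1|apply meet_lb2].
Qed.
Lemma oc_top {L : MOL} : ocomp (top : L) = bot.
Proof. rewrite <- (meet_ocomp L top). rewrite top_max. reflexivity. Qed.

Definition incl_s {L : MOL} (A B : L -> Prop) := forall x, A x -> B x.

Lemma set_ext {L : MOL} (A B : L -> Prop) : incl_s A B -> incl_s B A -> A = B.
Proof. intros H1 H2. apply functional_extensionality; intro x.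
apply propositional_extensionality; split; auto. Qed.

Definition gstep {L : MOL} (D : L -> Prop) : L -> Prop :=
  match excluded_middle_informative (exists x, ~ D x /\ is_chain (fun y => D y \/ y = x)) with
  | left H => let x := proj1_sig (constructive_indefinite_description _ H) in fun y => D y \/ y = x
  | right _ => D end.

Lemma gstep_incl {L : MOL} (D : L -> Prop) : incl_s D (gstep D).
Proof. unfold gstep; destruct excluded_middle_informative; intros y Hy; simpl; auto. Qed.

Inductive Tw {L : MOL} (C0 : L -> Prop) : (L -> Prop) -> Prop :=
| TwS : forall D, Tw C0 D -> Tw C0 (gstep D)
| TwU : forall F : (L -> Prop) -> Prop, (forall D, F D -> Tw C0 D) ->
    Tw C0 (fun x => C0 x \/ exists D, F D /\ D x).

Lemma Tw_C0 {L : MOL} (C0 D : L -> Prop) : Tw C0 D -> incl_s C0 D.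
Proof. induction 1; intros y Hy; auto. apply gstep_incl; auto. Qed.

Definition extreme {L : MOL} (C0 c : L -> Prop) :=
  forall t, Tw C0 t -> incl_s t c -> t = c \/ incl_s (gstep t) c.

Lemma lemma1 {L : MOL} (C0 c : L -> Prop) : Tw C0 c -> extreme C0 c ->
  forall t, Tw C0 t -> incl_s t c \/ incl_s (gstep c) t.
Proof. intros Hc Hx t Ht. induction Ht as [t0 Ht0 IH | F HF IH].
- destruct IH as [H|H].
  + destruct (Hx t0 Ht0 H) as [E|E].
    * subst. right. intros y Hy; exact Hy.
    * left; exact E.
  + right. intros y Hy. apply gstep_incl; auto.
- destruct (classic (exists D, F D /\ ~ incl_s D c)) as [[D [HD1 HD2]]|Hn].
  + right. destruct (IH D HD1) as [H|H]; [contradiction|].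
    intros y Hy; right; exists D; auto.
  + left. intros y [Hy|[D [HD Hy]]].
    * eapply Tw_C0; eauto.
    * destruct (classic (incl_s D c)) as [H|H]; auto. exfalso; apply Hn; eauto.
Qed.

Lemma lemma2 {L : MOL} (C0 c : L -> Prop) : Tw C0 c -> extreme C0 c.
Proof. induction 1 as [c0 Hc0 IH | F HF IH].
- intros t Ht Hinc. destruct (lemma1 C0 c0 Hc0 IH t Ht) as [H|H].
  + destruct (IH t Ht H) as [E|E].
    * subst. right. intros y Hy; exact Hy.
    * right. intros y Hy; apply gstep_incl; auto.
  + left. apply set_ext; auto.
- intros t Ht Hinc.
  destruct (classic (exists D, F D /\ ~ incl_s (gstep D) t)) as [[D [HD1 HD2]]|Hn].
  + destruct (lemma1 C0 D (HF D HD1) (IH D HD1) t Ht) as [H|H]; [|contradiction].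
    destruct (IH D HD1 t Ht H) as [E|E].
    * subst t. destruct (classic (exists D', F D' /\ ~ incl_s D' D)) as [[D' [H1 H2]]|Hn2].
      -- destruct (lemma1 C0 D (HF D HD1) (IH D HD1) D' (HF D' H1)) as [H3|H3]; [contradiction|].
         right. intros y Hy. right. exists D'; auto.
      -- left. apply set_ext; auto. intros y [Hy|[D' [H1 H2]]].
         ++ eapply Tw_C0; eauto.
         ++ destruct (classic (incl_s D' D)) as [H3|H3]; auto. exfalso; apply Hn2; eauto.
    * right. intros y Hy. right. exists D; auto.
  + left. apply set_ext; auto. intros y [Hy|[D [H1 H2]]].
    * eapply Tw_C0; eauto.
    * destruct (classic (incl_s (gstep D) t)) as [H3|H3].
      -- apply H3, gstep_incl, H2.
      -- exfalso; apply Hn; eauto.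
Qed.

Lemma Tw_total {L : MOL} (C0 A B : L -> Prop) : Tw C0 A -> Tw C0 B -> incl_s A B \/ incl_s B A.
Proof. intros HA HB. destruct (lemma1 C0 B HB (lemma2 C0 B HB) A HA) as [H|H]; auto.
right. intros y Hy. apply H, gstep_incl, Hy. Qed.

Lemma gstep_chain {L : MOL} (D : L -> Prop) : is_chain D -> is_chain (gstep D).
Proof. unfold gstep; destruct excluded_middle_informative as [H|H]; auto.
intros _. destruct (constructive_indefinite_description _ H) as [x [Hnx Hx]]; simpl. exact Hx. Qed.

Lemma Tw_chain {L : MOL} (C0 D : L -> Prop) : is_chain C0 -> Tw C0 D -> is_chain D.
Proof. intros HC0 HT. induction HT as [D HD IH | F HF IH].
- apply gstep_chain, IH.
- intros x y Hx Hy.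
  destruct Hx as [Hx|[D1 [F1 Hx]]]; destruct Hy as [Hy|[D2 [F2 Hy]]].
  + apply HC0; auto.
  + apply (IH D2 F2); auto. eapply Tw_C0; eauto.
  + apply (IH D1 F1); auto. eapply Tw_C0; eauto.
  + destruct (Tw_total C0 D1 D2 (HF D1 F1) (HF D2 F2)) as [H|H].
    * apply (IH D2 F2); auto.
    * apply (IH D1 F1); auto.
Qed.

Lemma hausdorff {L : MOL} (C0 : L -> Prop) : is_chain C0 ->
  exists M, is_maximal_chain M /\ incl_s C0 M.
Proof. intros HC0.
set (M := fun x => C0 x \/ exists D, Tw C0 D /\ D x).
assert (HM : Tw C0 M) by (apply TwU; auto).
exists M. split; [split|].
- eapply Tw_chain; eauto.
- intros D HD Hinc x Hx. apply NNPP; intro Hnx.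
  assert (Hg : Tw C0 (gstep M)) by (apply TwS; auto).
  assert (Hsub : incl_s (gstep M) M) by (intros y Hy; right; exists (gstep M); auto).
  assert (Hex : exists x, ~ M x /\ is_chain (fun y => M y \/ y = x)).
  { exists x; split; auto. intros a b Ha Hb. apply HD.
    destruct Ha as [Ha|Ha]; [auto|subst; auto].
    destruct Hb as [Hb|Hb]; [auto|subst; auto]. }
  revert Hsub. unfold gstep. destruct excluded_middle_informative as [H|H]; [|contradiction].
  destruct (constructive_indefinite_description _ H) as [x0 [Hx0 Hx1]]; simpl.
  intro Hsub. apply Hx0, Hsub. right; reflexivity.
- intros y Hy; left; exact Hy.
Qed.

Definition chainl {L : MOL} (l : list L) := forall x y, In x l -> In y l -> le x y \/ le y x.

Lemma chain_bound (L : MOL) (d : nat) : has_height L d ->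
  forall l : list L, NoDup l -> chainl l -> length l <= S d.
Proof. intros Hh l Hnd Hch.
destruct (hausdorff (fun x => In x l)) as [M [HM Hinc]]; [exact Hch|].
destruct (Hh M HM) as [lM [Hnd2 [Hlen Hiff]]].
rewrite <- Hlen. apply NoDup_incl_length; auto.
intros x Hx. apply Hiff, Hinc, Hx. Qed.

Definition Iv {L : MOL} (a b x : L) := le a x /\ le x b.
Definition CB {L : MOL} (k : nat) (a b : L) := forall l, NoDup l -> chainl l ->
  (forall x, In x l -> Iv a b x) -> length l <= k.
Definition Fin {L : MOL} (a b : L) := exists l, forall x, Iv a b x -> In x l.
Definition Conf (L : MOL) (m : nat) := exists (a c : L) l, NoDup l /\ m <= length l /\
  forall x y, In x l -> In y l -> x <> y -> meet x y = a /\ join x y = c.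
Definition Atom {L : MOL} (a b p : L) := Iv a b p /\ p <> a /\
  forall y, le a y -> le y p -> y = a \/ y = p.

Lemma CB_up {L : MOL} k (a b x : L) : CB (S k) a b -> Iv a b x -> x <> a -> CB k x b.
Proof. intros H [H1 H2] Hne l Hnd Hch Hin.
assert (length (a :: l) <= S k); [|simpl in *; lia].
apply H.
- constructor; auto. intro Ha. apply Hne. apply le_antisym; auto. apply (Hin a Ha).
- intros u w Hu Hw. destruct Hu as [Hu|Hu]; destruct Hw as [Hw|Hw]; subst.
  + left; apply le_refl.
  + left. apply le_trans with x; auto. apply (Hin w Hw).
  + right. apply le_trans with x; auto. apply (Hin u Hu).
  + apply Hch; auto.
- intros u [Hu|Hu]; subst.
  + split; [apply le_refl|]. apply le_trans with x; auto.
  + destruct (Hin u Hu); split; auto. apply le_trans with x; auto.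
Qed.

Lemma min_aux {L : MOL} k (a b : L) (P : L -> Prop) : CB k a b -> (forall y, P y -> Iv a b y) ->
  forall f z l, P z -> NoDup (z :: l) -> chainl (z :: l) -> (forall y, In y (z :: l) -> Iv a b y) ->
  (forall y, In y l -> le z y) -> k < length (z :: l) + f ->
  exists p, P p /\ le p z /\ forall y, P y -> le y p -> y = p.
Proof. intros HCB HP f. induction f as [|f IH]; intros z l Pz Hnd Hch Hin Hz Hlt.
- exfalso. specialize (HCB _ Hnd Hch Hin). lia.
- destruct (classic (exists y, P y /\ le y z /\ y <> z)) as [[y [Py [Hyz Hne]]]|Hn].
  + assert (N1 : NoDup (y :: z :: l)).
    { constructor; auto. intros [E|E]; [congruence|]. apply Hne, le_antisym; auto.
      }
    assert (Hy' : forall t, In t (y :: z :: l) -> t = y \/ le y t).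
    { intros t [Ht|[Ht|Ht]]; subst; auto. right. apply le_trans with z; auto. }
    assert (N2 : chainl (y :: z :: l)).
    { intros u w Hu Hw.
      destruct Hu as [Hu|Hu]; destruct Hw as [Hw|Hw]; subst.
      -- left; apply le_refl.
      -- left. destruct (Hy' w (or_intror Hw)) as [E|E]; [subst; apply le_refl| auto].
      -- right. destruct (Hy' u (or_intror Hu)) as [E|E]; [subst; apply le_refl| auto].
      -- apply Hch; auto. }
    assert (N3 : forall t, In t (y :: z :: l) -> Iv a b t).
    { intros t [Ht|Ht]; [subst; auto|auto]. }
    assert (N4 : forall t, In t (z :: l) -> le y t).
    { intros t [Ht|Ht]; [subst; auto|]. apply le_trans with z; auto. }
    assert (N5 : k < length (y :: z :: l) + f) by (simpl in *; lia).
    destruct (IH y (z :: l) Py N1 N2 N3 N4 N5) as [p [Pp [Hpy Hm]]].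
    * exists p; split; auto. split; auto. apply le_trans with y; auto.
  + exists z. split; auto. split; [apply le_refl|]. intros y Py Hyz.
    apply NNPP; intro Hne. apply Hn. eauto.
Qed.

Lemma min_exists {L : MOL} k (a b : L) (P : L -> Prop) : CB k a b -> (forall y, P y -> Iv a b y) ->
  forall z, P z -> exists p, P p /\ le p z /\ forall y, P y -> le y p -> y = p.
Proof. intros HCB HP z Pz. apply (min_aux k a b P HCB HP k z []).
- exact Pz.
- constructor; [intros []|constructor].
- intros u w [Hu|[]] [Hw|[]]; subst; left; apply le_refl.
- intros y [Hy|[]]; subst; auto.
- intros y [].
- simpl; lia.
Qed.

Lemma atom_below {L : MOL} k (a b x : L) : CB k a b -> Iv a b x -> x <> a ->
  exists p, Atom a b p /\ le p x.
Proof. intros HCB Hx Hne.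
destruct (min_exists k a b (fun y => Iv a b y /\ y <> a /\ le y x) HCB) with (z := x)
  as [p [[Hp1 [Hp2 Hp3]] [_ Hm]]].
- intros y [H _]; exact H.
- split; auto. split; auto. apply le_refl.
- exists p. split; auto. split; auto. split; auto.
  intros y Hay Hyp. destruct (classic (y = a)) as [E|E]; auto. right.
  apply Hm; auto. split; [split|split]; auto.
  + apply le_trans with p; auto. apply Hp1.
  + apply le_trans with p; auto.
Qed.

Lemma atom_meet {L : MOL} (a b p q : L) : Atom a b p -> Atom a b q -> p <> q -> meet p q = a.
Proof. intros [[Hp1 Hp2] [Hp3 Hp4]] [[Hq1 Hq2] [Hq3 Hq4]] Hne.
destruct (Hp4 (meet p q)) as [E|E]; auto.
- apply meet_glb; auto.
- apply meet_lb1.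
- exfalso. assert (le p q) by exact E.
  destruct (Hq4 p) as [E2|E2]; auto.
Qed.

Lemma atom_join {L : MOL} (a b p q q' c : L) : Atom a b p -> Atom a b q -> Atom a b q' -> q <> q' ->
  join p q = c -> join p q' = c -> join q q' = c.
Proof. intros [[Hp1 Hp2] [Hp3 Hp4]] [[Hq1 Hq2] [Hq3 Hq4]] [[Hr1 Hr2] [Hr3 Hr4]] Hne E1 E2.
set (y := join q q').
assert (Hyc : le y c).
{ apply join_lub; [rewrite <- E1; apply join_ub2|rewrite <- E2; apply join_ub2]. }
assert (Hm : join q (meet p y) = y).
{ rewrite (modular L q p y) by apply join_ub1. rewrite joinC, E1, meetC. exact Hyc. }
destruct (Hp4 (meet p y)) as [E|E].
- apply meet_glb; auto. apply le_trans with q; auto. apply join_ub1.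
- apply meet_lb1.
- exfalso. rewrite E in Hm. assert (Hqa : join q a = q).
  { rewrite joinC. apply le_join; auto. }
  rewrite Hqa in Hm. assert (le q' q) by (rewrite Hm; apply join_ub2).
  destruct (Hq4 q') as [E3|E3]; auto.
- assert (le p y) by (rewrite <- E; apply meet_lb2).
  apply le_antisym; auto. rewrite <- E1. apply join_lub; auto. apply join_ub1.
Qed.

Definition eqb {L : MOL} (x y : L) : bool := if excluded_middle_informative (x = y) then true else false.
Lemma eqb_spec {L : MOL} (x y : L) : eqb x y = true <-> x = y.
Proof. unfold eqb; destruct excluded_middle_informative; split; congruence. Qed.

Lemma flen {T : Type} (p q : T -> bool) (A : list T) : length (filter p (filter q A)) <= length (filter p A).
Proof. induction A as [|x A IH]; simpl; auto. destruct (q x); simpl; destruct (p x); simpl; lia. Qed.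

Lemma pigeon {L : MOL} m (f : L -> L) (J : list L) : forall A,
  (forall q, In q A -> In (f q) J) -> m * length J < length A ->
  exists c, m < length (filter (fun q => eqb (f q) c) A).
Proof. induction J as [|c0 J IH]; intros A HA Hlt.
- destruct A as [|q A]; simpl in *; [lia|]. destruct (HA q (or_introl eq_refl)).
- destruct (Nat.lt_ge_cases m (length (filter (fun q => eqb (f q) c0) A))) as [H|H]; eauto.
  edestruct (IH (filter (fun q => negb (eqb (f q) c0)) A)) as [c Hc]; [| |exists c; eapply Nat.lt_le_trans; [exact Hc|apply flen]].
  + intros q Hq. apply filter_In in Hq as [Hq1 Hq2].
    destruct (HA q Hq1) as [E|E]; auto. subst. rewrite (proj2 (eqb_spec _ _) eq_refl) in Hq2. discriminate.
  + assert (Hs : length A = length (filter (fun q => eqb (f q) c0) A) + length (filter (fun q => negb (eqb (f q) c0)) A)).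
    { clear. induction A as [|x A IH]; simpl; auto. destruct (eqb (f x) c0); simpl; lia. }
    simpl in Hlt. lia.
Qed.

Lemma atom_bound {L : MOL} m (a b p1 : L) (J : list L) : ~ Conf L m -> Atom a b p1 ->
  (forall x, Iv p1 b x -> In x J) ->
  forall A, NoDup A -> (forall q, In q A -> Atom a b q) -> length A <= S (m * length J).
Proof. intros HC Hp1 HJ A Hnd HA.
set (A' := filter (fun q => negb (eqb q p1)) A).
assert (H1 : length A <= length (p1 :: A')).
{ apply NoDup_incl_length; auto. intros q Hq. destruct (classic (q = p1)) as [E|E]; [left; auto|right].
  apply filter_In. split; auto. destruct (eqb q p1) eqn:Eq; auto. apply eqb_spec in Eq; contradiction. }
simpl in H1.
destruct (Nat.le_gt_cases (length A') (m * length J)) as [H|H]; [lia|exfalso].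
destruct (pigeon m (fun q => join p1 q) J A') as [c Hc]; auto.
- intros q Hq. apply HJ. apply filter_In in Hq as [Hq _]. destruct (HA q Hq) as [[_ Hqb] _].
  destruct Hp1 as [[_ Hpb] _]. split; [apply join_ub1|apply join_lub; auto].
- apply HC. exists a, c, (filter (fun q => eqb (join p1 q) c) A'). split; [|split].
  + apply NoDup_filter. apply NoDup_filter. auto.
  + lia.
  + intros x y Hx Hy Hne. apply filter_In in Hx as [Hx Ex]. apply filter_In in Hy as [Hy Ey].
    apply eqb_spec in Ex. apply eqb_spec in Ey.
    apply filter_In in Hx as [Hx _]. apply filter_In in Hy as [Hy _].
    split.
    * apply atom_meet with b; auto.
    * apply (atom_join a b p1); auto.
Qed.

Lemma complete_atoms {L : MOL} (a b : L) N :
  (forall A, NoDup A -> (forall q, In q A -> Atom a b q) -> length A <= N) ->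
  exists A, forall q, Atom a b q -> In q A.
Proof. intros HN.
assert (G : forall f A, NoDup A -> (forall q, In q A -> Atom a b q) -> N <= length A + f ->
  exists A, forall q, Atom a b q -> In q A).
{ induction f as [|f IH]; intros A Hnd HA Hle.
  - exists A. intros q Hq. apply NNPP; intro Hn.
    assert (length (q :: A) <= N) by (apply HN; [constructor; auto|intros r [E|E]; subst; auto]).
    simpl in *; lia.
  - destruct (classic (exists q, Atom a b q /\ ~ In q A)) as [[q [Hq Hn]]|Hn].
    + apply (IH (q :: A)); [constructor; auto|intros r [E|E]; subst; auto|simpl; lia].
    + exists A. intros q Hq. apply NNPP; intro Hq'. apply Hn; eauto. }
apply (G N []); [constructor|intros q []|simpl; lia].
Qed.

Lemma collect {L : MOL} (b : L) : forall A : list L,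
  (forall p, In p A -> exists J, forall x, Iv p b x -> In x J) ->
  exists J, forall p x, In p A -> Iv p b x -> In x J.
Proof. induction A as [|p A IH]; intros H.
- exists []. intros p x [].
- destruct (H p (or_introl eq_refl)) as [J1 HJ1].
  destruct IH as [J2 HJ2]; [intros q Hq; apply H; right; auto|].
  exists (J1 ++ J2). intros q x [E|Hq] Hx; apply in_or_app; [subst; auto|eauto].
Qed.

Lemma fin_main {L : MOL} m : ~ Conf L m -> forall k (a b : L), CB k a b -> Fin a b.
Proof. intros HC k. induction k as [|k IH]; intros a b HCB.
- exists []. intros x Hx. exfalso.
  assert (length [x] <= 0); [|simpl in *; lia].
  apply HCB; [constructor; [intros []|constructor]| |].
  + intros u w [Hu|[]] [Hw|[]]; subst; left; apply le_refl.
  + intros y [Hy|[]]; subst; auto.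
- assert (HF : forall p, Iv a b p -> p <> a -> Fin p b).
  { intros p Hp Hne. apply IH. apply CB_up with a; auto. }
  destruct (classic (exists p1, Atom a b p1)) as [[p1 Hp1]|Hno].
  + destruct (HF p1 (proj1 Hp1) (proj1 (proj2 Hp1))) as [J1 HJ1].
    destruct (complete_atoms a b (S (m * length J1))) as [A HA].
    { intros A Hnd HA. apply (atom_bound m a b p1); auto. }
    destruct (collect b (filter (fun q => if excluded_middle_informative (Atom a b q) then true else false) A)) as [J HJ].
    { intros p Hp. apply filter_In in Hp as [_ Hp].
      destruct (excluded_middle_informative (Atom a b p)) as [Ha|Ha]; [|discriminate].
      destruct Ha as [Hp1' [Hp2 _]]. apply HF; auto. }
    exists (a :: J). intros x Hx. destruct (classic (x = a)) as [E|E]; [left; auto|right].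
    destruct (atom_below (S k) a b x HCB Hx E) as [p [Hp Hpx]].
    apply (HJ p).
    * apply filter_In. split; auto. destruct (excluded_middle_informative (Atom a b p)); auto.
    * split; auto. apply Hx.
  + exists [a]. intros x Hx. left. apply NNPP; intro E.
    destruct (atom_below (S k) a b x HCB Hx (fun H => E (eq_sym H))) as [p [Hp _]]. eauto.
Qed.

Lemma conf_all (L : MOL) (d : nat) : has_height L d -> ~ finite_type L -> forall m, Conf L m.
Proof. intros Hh Hinf m. apply NNPP; intro HC.
destruct (fin_main m HC (S d) bot top) as [l Hl].
- intros l Hnd Hch _. apply (chain_bound L d Hh); auto.
- apply Hinf. exists l. intro x. apply Hl. split; [apply le_bot|apply le_top].
Qed.

Definition Et (p : nat * nat) : term :=
  TJoin (TMeet (Var (fst p)) (Var (snd p))) (TMeet (TComp (Var (fst p))) (TComp (Var (snd p)))).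
Definition bigj (ps : list (nat * nat)) : term := fold_right (fun p t => TJoin (Et p) t) TBot ps.
Definition pairs (m : nat) : list (nat * nat) :=
  flat_map (fun j => map (fun i => (i, j)) (seq 0 j)) (seq 0 m).

Lemma in_pairs m p : In p (pairs m) <-> fst p < snd p < m.
Proof. unfold pairs. rewrite in_flat_map. split.
- intros [j [Hj Hp]]. apply in_map_iff in Hp as [i [E Hi]]. subst. apply in_seq in Hj, Hi. simpl. lia.
- destruct p as [i j]; simpl; intros H. exists j. split; [apply in_seq; lia|].
  apply in_map_iff. exists i. split; auto. apply in_seq; lia.
Qed.

Lemma bigj_top {L : MOL} (v : nat -> L) ps p : In p ps -> eval v (Et p) = top -> eval v (bigj ps) = top.
Proof. induction ps as [|q ps IH]; intros Hin He; [destruct Hin|].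
destruct Hin as [E|Hin]; simpl.
- subst. change (join (eval v (Et p)) (eval v (bigj ps)) = top). rewrite He, joinC. apply join_top.
- change (join (eval v (Et q)) (eval v (bigj ps)) = top). rewrite IH; auto. apply join_top.
Qed.

Lemma bigj_const {L : MOL} (v : nat -> L) w ps : ps <> [] -> (forall p, In p ps -> eval v (Et p) = w) ->
  eval v (bigj ps) = w.
Proof. induction ps as [|q ps IH]; intros Hne H; [congruence|].
change (join (eval v (Et q)) (eval v (bigj ps)) = w).
rewrite (H q (or_introl eq_refl)). destruct ps as [|r ps].
- simpl. apply join_bot.
- rewrite IH; [apply join_idem|congruence|intros p Hp; apply H; right; auto].
Qed.

Lemma nodup_map_seq {T : Type} (f : nat -> T) : forall l, NoDup l -> ~ NoDup (map f l) ->
  exists i j, In i l /\ In j l /\ i <> j /\ f i = f j.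
Proof. induction l as [|a l IH]; intros Hnd Hn; [destruct Hn; constructor|].
inversion Hnd; subst. simpl in Hn.
destruct (classic (In (f a) (map f l))) as [H|H].
- apply in_map_iff in H as [y [E Hy]]. exists a, y. repeat split; auto; [left; auto|right; auto|].
  intro; subst; contradiction.
- destruct IH as [i [j [G1 [G2 [G3 G4]]]]]; auto.
  + intro Hd. apply Hn. constructor; auto.
  + exists i, j. repeat split; auto; right; auto.
Qed.

Theorem mainTheorem6 (L : MOL) (d : nat) :
  1 < d -> ~ finite_type L -> simple L -> has_height L d ->
  ~ (exists S : L -> Prop, finite_set S /\ test_set S).
Proof.
intros _ Hinf _ Hh [Sx [[lS HS] Htest]].
set (m := S (S (length lS))).
destruct (conf_all L d Hh Hinf m) as [a [c [l [Hnd [Hlen Hpw]]]]].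
assert (Hid : holds_in Sx (bigj (pairs m)) TTop).
{ intros v Hv. simpl eval at 2.
  assert (Hn : ~ NoDup (map v (seq 0 m))).
  { intro Hd. apply NoDup_incl_length with (l' := lS) in Hd.
    - rewrite length_map, length_seq in Hd. unfold m in Hd; lia.
    - intros x Hx. apply in_map_iff in Hx as [i [E _]]. subst. apply HS, Hv. }
  destruct (nodup_map_seq v (seq 0 m) (seq_NoDup _ _) Hn) as [i [j [Hi [Hj [Hij E]]]]].
  apply in_seq in Hi, Hj.
  assert (Hp : exists p, In p (pairs m) /\ v (fst p) = v (snd p)).
  { destruct (Nat.lt_total i j) as [H|[H|H]]; [exists (i, j)|contradiction|exists (j, i)];
    (split; [apply in_pairs; simpl; lia|simpl; auto]). }
  destruct Hp as [p [Hp Ep]]. apply bigj_top with p; auto.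
  change (join (meet (v (fst p)) (v (snd p))) (meet (ocomp (v (fst p))) (ocomp (v (snd p)))) = top).
  rewrite Ep, !meet_idem. apply join_ocomp. }
specialize (Htest _ _ Hid (fun i => nth i l bot) (fun _ => I)).
simpl eval at 2 in Htest.
rewrite (bigj_const _ (join a (ocomp c))) in Htest.
- assert (H0 : nth 0 l bot <> nth 1 l bot).
  { intro E. apply NoDup_nth in E; auto; unfold m in Hlen; lia. }
  destruct (Hpw (nth 0 l bot) (nth 1 l bot)) as [Ea Ec]; auto;
    try (apply nth_In; unfold m in Hlen; lia).
  set (x := nth 0 l bot) in *. set (y := nth 1 l bot) in *.
  assert (Hac : le a c).
  { rewrite <- Ea, <- Ec. apply le_trans with x; [apply meet_lb1|apply join_ub1]. }
  assert (Hz : meet (ocomp a) c = bot).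
  { rewrite <- (ocompK L c) at 1. rewrite <- demorgan, Htest. apply oc_top. }
  assert (Eq : a = c).
  { pose proof (modular L a (ocomp a) c Hac) as Hm.
    rewrite Hz, join_bot, join_ocomp, top_max in Hm. exact Hm. }
  apply H0. apply le_antisym.
  + apply le_trans with (join x y); [apply join_ub1|]. rewrite Ec, <- Eq, <- Ea. apply meet_lb2.
  + apply le_trans with (join x y); [apply join_ub2|]. rewrite Ec, <- Eq, <- Ea. apply meet_lb1.
- intro E. assert (Hin : In (0, 1) (pairs m)) by (apply in_pairs; simpl; unfold m; lia).
  rewrite E in Hin. destruct Hin.
- intros p Hp. apply in_pairs in Hp.
  change (join (meet (nth (fst p) l bot) (nth (snd p) l bot))
    (meet (ocomp (nth (fst p) l bot)) (ocomp (nth (snd p) l bot))) = join a (ocomp c)).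
  rewrite <- demorgan.
  destruct (Hpw (nth (fst p) l bot) (nth (snd p) l bot)) as [Ea Ec];
    try (apply nth_In; lia).
  + intro E. apply NoDup_nth in E; auto; lia.
  + rewrite Ea, Ec. reflexivity.
Qed.
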